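(* Let $n\ge 2$ and $k\ge 1$ be integers, and let $\mathcal{A}_n$ denote the set of Dyck $n$-paths whose terminal descent has even length and all of whose other descents to ground level (if any) have odd length. Then there is a bijection between the paths in $\mathcal{A}_n$ having exactly $k$ returns and the Dyck $(n-1)$-paths that contain exactly $k-1$ early hills.
   Context: A Dyck $n$-path is a lattice path consisting of $n$ upsteps $U=(1,1)$ and $n$ downsteps $D=(1,-1)$ that starts and ends at height $0$ (ground level) and never goes below ground level. A descent is a maximal run of consecutive downsteps; its length is the number of downsteps in it. The terminal descent is the descent that ends at the final point of the path. A return is a downstep ending at ground level, and a descent to ground level is a descent whose last step is a return. An early hill is an occurrence of three consecutive steps $UDU$ in which the first $U$ starts at ground level. *)

(* Defs.v *)
(* A lattice path is a sequence of steps: true = U = (1,1), false = D = (1,-1). *)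
From mathcomp Require Import all_boot.
Set Implicit Arguments. Unset Strict Implicit. Unset Printing Implicit Defensive.

Definition path_t := seq bool.

Definition ups (s : path_t) : nat := count id s.
Definition downs (s : path_t) : nat := count negb s.

Definition dyck (n : nat) (p : path_t) : Prop :=
  [/\ ups p = n, downs p = n &
      forall i, downs (take i p) <= ups (take i p)].

Definition trailing_downs (s : path_t) : nat := find id (rev s).

Definition terminal_descent_length (p : path_t) : nat := trailing_downs p.

(* step i (0-based) is a return: a downstep ending at ground level *)
Definition is_return (p : path_t) (i : nat) : bool :=
  [&& i < size p, ~~ nth true p i &
      ups (take i.+1 p) == downs (take i.+1 p)].

Definition nreturns (p : path_t) : nat := count (is_return p) (iota 0 (size p)).

(* The descents to ground level are the descents whose last step is a return;
   the descent whose last step is step i has length trailing_downs (take i.+1 p).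
   The non-terminal ones are those whose last step i is not the final step. *)
Definition in_A (n : nat) (p : path_t) : Prop :=
  [/\ dyck n p,
      ~~ odd (terminal_descent_length p) &
      forall i, is_return p i -> i.+1 < size p ->
        odd (trailing_downs (take i.+1 p))].

Definition is_early_hill (p : path_t) (i : nat) : bool :=
  [&& i.+2 < size p, nth false p i, ~~ nth true p i.+1, nth false p i.+2 &
      ups (take i p) == downs (take i p)].

Definition nearly_hills (p : path_t) : nat := count (is_early_hill p) (iota 0 (size p)).

(* Main.v *)
From mathcomp Require Import all_boot zify.
Require Import Defs.
From Stdlib Require Import ProofIrrelevance IndefiniteDescription.
Set Implicit Arguments. Unset Strict Implicit. Unset Printing Implicit Defensive.
Inductive tree := Lf | Nd of tree & tree.

Fixpoint enc t := match t with Lf => [::] | Nd l r => true :: enc l ++ false :: enc r end.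
Fixpoint tsize t := match t with Lf => 0 | Nd l r => (tsize l + tsize r).+1 end.
Fixpoint app t u := match t with Lf => u | Nd l r => Nd l (app r u) end.
Definition isLf t := if t is Lf then true else false.
Fixpoint nret t := match t with Lf => 0 | Nd _ r => (nret r).+1 end.
Fixpoint nh t := match t with Lf => 0 | Nd l r => (isLf l && ~~ isLf r) + nh r end.
Fixpoint td t := match t with Lf => 0 | Nd l r => if isLf r then (td l).+1 else td r end.
Fixpoint Cp t : Prop := match t with Lf => True | Nd l r => (~~ isLf r -> ~~ odd (td l)) /\ Cp r end.
Fixpoint hf t : Prop := match t with Lf => True | Nd l r => ~~ isLf l /\ hf r end.

Lemma tsize_app a b : tsize (app a b) = tsize a + tsize b.
Proof. elim: a => //= l _ r IH; rewrite IH; lia. Qed.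

Lemma app_nLf a x y : app a (Nd x y) <> Lf.
Proof. by case: a. Qed.

Lemma app_isLf a x y : isLf (app a (Nd x y)) = false.
Proof. by case: a. Qed.

Lemma app_a0 a : app a Lf = a.
Proof. by elim: a => //= l _ r ->. Qed.

Lemma td_app a b : td (app a b) = if isLf b then td a else td b.
Proof.
case: b => [|x y]; first by rewrite app_a0.
elim: a => //= l _ r IH.
move: IH (@app_nLf r x y); case: (app r (Nd x y)) => //= u v -> _ //.
Qed.

Lemma last_split a b x y : app a (Nd x Lf) = app b (Nd y Lf) -> a = b /\ x = y.
Proof.
elim: a b => [|l _ r IH] [|l' r'] //=.
- by case=> ->.
- by case=> _ /esym /app_nLf.
- by case=> _ /app_nLf.
- by case=> -> /IH [-> ->].
Qed.

Lemma lastdec t : t = Lf \/ exists a x, t = app a (Nd x Lf).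
Proof.
elim: t => [|l _ r [->|[a [x ->]]]]; first by left.
- by right; exists Lf, l.
- by right; exists (Nd l a), x.
Qed.

Inductive Phi : tree -> tree -> Prop :=
| Phi0 : Phi Lf Lf
| PhiS R S P G : Phi P G -> Phi (app R (Nd (app S (Nd P Lf)) Lf)) (Nd (Nd R S) G).

Lemma Phi_prop t u : Phi t u -> [/\ tsize t = tsize u, ~~ odd (td t) & hf u].
Proof.
elim=> [|R S P G _ [e1 e2 e3]] //=.
rewrite !tsize_app /= !tsize_app /= td_app /= td_app /= negbK.
split=> //; lia.
Qed.

Lemma Phi_hf t u : Phi t u -> hf u.
Proof. by case/Phi_prop. Qed.

Lemma Phi_exE m t : tsize t < m -> ~~ odd (td t) -> exists u, Phi t u.
Proof.
elim: m t => // m IH t.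
case: (lastdec t) => [->|[R [x ->]]]; first by exists Lf; constructor.
rewrite tsize_app td_app /= => hs ho.
case: (lastdec x) ho hs => [->//|[S [P ->]]].
rewrite td_app /= negbK tsize_app /= => ho hs.
have [G HG] := IH P ltac:(lia) ho.
by exists (Nd (Nd R S) G); constructor.
Qed.

Lemma Phi_exF u : hf u -> exists t, Phi t u.
Proof.
elim: u => [|[|R S] _ r IH] /=; first by exists Lf; constructor.
- by case.
- case=> _ /IH [t' Ht]. by exists (app R (Nd (app S (Nd t' Lf)) Lf)); constructor.
Qed.

Lemma Phi_fun t u : Phi t u -> forall u', Phi t u' -> u = u'.
Proof.
elim=> [|R S P G HP IH] u' H'; inversion H' => //.
- by case: (app_nLf H).
- by case: (app_nLf (esym H0)).
- case/last_split: H => -> /last_split [-> eP]; subst P0.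
  by rewrite (IH _ H0).
Qed.

Lemma Phi_inj t u : Phi t u -> forall t', Phi t' u -> t = t'.
Proof.
elim=> [|R S P G HP IH] t' H'; inversion H' => //.
by rewrite (IH _ H1).
Qed.

Inductive Big : nat -> tree -> tree -> Prop :=
| Big1 R Q F : Phi Q F -> Big 1 (Nd (app R (Nd Q Lf)) Lf) (app F (Nd R Lf))
| BigS k Q G t u : Phi Q G -> Big k t u -> Big k.+1 (Nd Q t) (app G (Nd Lf u)).

Lemma nh_hf F w : hf F -> nh (app F w) = nh w.
Proof. elim: F => //= l _ r IH [hl hr]; rewrite IH //; by case: l hl. Qed.

Lemma Big_prop k t u : Big k t u ->
  [/\ (tsize u).+1 = tsize t, nret t = k, ~~ odd (td t), Cp t &
      [/\ nh u = k.-1, 0 < k, ~~ isLf t & ~~ isLf u]].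
Proof.
elim=> {k t u} [R Q F HP|k Q G t' u' HP _ [e1 e2 e3 e4 [e5 e6 e7 e8]]];
  have [s1 s2 s3] := Phi_prop HP.
- rewrite /= !tsize_app /= td_app /= negbK nh_hf //.
  split=> //; first lia. by rewrite app_isLf /= andbF.
- have -> : td (Nd Q t') = td t' by move: e7 => /=; case: (t').
  rewrite /= !tsize_app /= nh_hf //=.
  rewrite app_isLf /= e2; split=> //; first lia.
  split=> //; rewrite e8 e5; case: (k) e6 => //.
Qed.

Lemma Big_exA t k : nret t = k -> ~~ odd (td t) -> Cp t -> 0 < k -> exists u, Big k t u.
Proof.
elim: t k => [|l _ r IH] k /= <-; first by [].
case E: (isLf r).
- case: r E IH => // _ _ ho _ _.
  case: (lastdec l) ho => [->//|[R [Q ->]]].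
  rewrite td_app /= negbK => ho.
  have [F HF] := Phi_exE (ltnSn _) ho.
  by exists (app F (Nd R Lf)); constructor.
- move=> ho [hl hr] _.
  have [G HG] := Phi_exE (ltnSn _) (hl isT).
  case: r E IH ho hr => // a b _ IH ho hr.
  have [u Hu] := IH _ erefl ho hr isT.
  by exists (app G (Nd Lf u)); constructor.
Qed.

Lemma Bdec u : u <> Lf ->
  (nh u = 0 /\ exists F R, hf F /\ u = app F (Nd R Lf)) \/
  (exists G u', [/\ hf G, u' <> Lf, u = app G (Nd Lf u') & nh u = (nh u').+1]).
Proof.
elim: u => // l _ r IH _.
case: r IH => [|a b] IH.
- left; split; first by rewrite /= andbF.
  by exists Lf, l.
- case: l => [|x y].
  + right; exists Lf, (Nd a b); split=> //.
  + case: (IH ltac:(done)) => [[h0 [F [R [hF e]]]]|[G [u' [hG hu' e h]]]].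
    * left; split; first exact: h0.
      by exists (Nd (Nd x y) F), R; rewrite /= e.
    * right; exists (Nd (Nd x y) G), u'; split=> //; by rewrite e.
Qed.

Lemma Big_exB k u : u <> Lf -> nh u = k.-1 -> 0 < k -> exists t, Big k t u.
Proof.
elim: k u => // k IH u hu hn _.
case: (Bdec hu) => [[h0 [F [R [hF e]]]]|[G [u' [hG hu' e h]]]].
- case: k IH hn => [|k] IH hn; last by rewrite h0 in hn.
  have [Q HQ] := Phi_exF hF.
  by exists (Nd (app R (Nd Q Lf)) Lf); rewrite e; constructor.
- case: k IH hn => [|k] IH hn; first by rewrite h in hn.
  rewrite h in hn; case: hn => hn.
  have [t Ht] := IH u' hu' hn isT.
  have [Q HQ] := Phi_exF hG.
  by exists (Nd Q t); rewrite e; constructor.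
Qed.

Lemma Big_fun k t u : Big k t u -> forall k' u', Big k' t u' -> u = u'.
Proof.
elim=> {k t u} [R Q F HP|k Q G t' u' HP HB IH] k2 u2 H'; inversion H'; subst.
- by case/last_split: H => eR eQ; subst; rewrite (Phi_fun HP H1).
- by match goal with Hb : Big _ Lf _ |- _ => have [_ _ _ _ [_ _ h _]] := Big_prop Hb end.
- by match goal with Hb : Big _ Lf _ |- _ => have [_ _ _ _ [_ _ h _]] := Big_prop Hb end.
- by rewrite (Phi_fun HP H2) (IH _ _ H4).
Qed.

Lemma hf_split1 F G R u' : hf F -> hf G -> u' <> Lf -> app F (Nd R Lf) <> app G (Nd Lf u').
Proof.
elim: F G => [|l _ r IH] [|l' r'] //=.
- by move=> _ _ hu [_ /esym].
- by move=> _ _ _ [_ /esym /app_nLf].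
- by case=> hl _ _ _ [el]; rewrite el in hl.
- by case=> _ hr [_ hr'] hu [_ /IH]; apply.
Qed.

Lemma hf_split2 G G' u u' : hf G -> hf G' -> app G (Nd Lf u) = app G' (Nd Lf u') -> G = G' /\ u = u'.
Proof.
elim: G G' => [|l _ r IH] [|l' r'] //=.
- by move=> _ _ [].
- by move=> _ [hl _] [el]; rewrite -el in hl.
- by case=> hl _ _ [el]; rewrite el in hl.
- by case=> _ hr [_ hr'] [-> /IH [] // -> ->].
Qed.

Lemma Big_inj k t u : Big k t u -> forall k' t', Big k' t' u -> t = t'.
Proof.
elim=> {k t u} [R Q F HP|k Q G t' u' HP HB IH] k2 t2 H'; inversion H'; subst.
- by case/last_split: H => eF eR; subst; rewrite (Phi_inj HP H2).
- have [_ _ _ _ [_ _ _ hu]] := Big_prop H3; exfalso.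
  apply: (hf_split1 (Phi_hf HP) (Phi_hf H0) _ (esym H)); by case: (u) hu.
- have [_ _ _ _ [_ _ _ hu]] := Big_prop HB; exfalso.
  apply: (hf_split1 (Phi_hf H2) (Phi_hf HP) _ H); by case: (u') hu.
- case/(hf_split2 (Phi_hf H0) (Phi_hf HP)): H => eG eu; subst.
  by rewrite (Phi_inj HP H0) (IH _ _ H3).
Qed.
Definition PN (s : path_t) := forall i, downs (take i s) <= ups (take i s).

Lemma ups_cat a b : ups (a ++ b) = ups a + ups b.
Proof. exact: count_cat. Qed.
Lemma downs_cat a b : downs (a ++ b) = downs a + downs b.
Proof. exact: count_cat. Qed.
Lemma ups_cons x s : ups (x :: s) = x + ups s.
Proof. by []. Qed.
Lemma downs_cons x s : downs (x :: s) = ~~ x + downs s.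
Proof. by []. Qed.
Lemma ups_nil : ups [::] = 0. Proof. by []. Qed.
Lemma downs_nil : downs [::] = 0. Proof. by []. Qed.
Definition udE := (ups_cat, downs_cat, ups_cons, downs_cons, ups_nil, downs_nil).

Lemma enc_ups t : ups (enc t) = tsize t.
Proof. elim: t => //= l IHl r IHr; rewrite ?udE IHl IHr /=; lia. Qed.
Lemma enc_downs t : downs (enc t) = tsize t.
Proof. elim: t => //= l IHl r IHr; rewrite ?udE IHl IHr /=; lia. Qed.

Lemma enc_PN t : PN (enc t).
Proof.
elim: t => [|l IHl r IHr] [|i] //=.
rewrite ?udE take_cat.
case: ifP => hi; first by have := IHl i; lia.
case: (i - size (enc l)) => [|j] /=; rewrite ?udE ?enc_ups ?enc_downs; first lia.
have := IHr j; lia.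
Qed.

Lemma split_lt s1 s2 x y : PN s2 -> ups s1 = downs s1 ->
  s1 ++ false :: x = s2 ++ false :: y -> size s1 < size s2 -> False.
Proof.
move=> P2 b1 e lt.
have := congr1 (take (size s1).+1) e.
rewrite [LHS]take_cat [RHS]takel_cat // ltnNge leqnSn /= subSnn /= => e2.
have := P2 (size s1).+1; rewrite -e2 take0 ?udE /=; lia.
Qed.

Lemma split_uniq s1 s2 x y : PN s1 -> PN s2 -> ups s1 = downs s1 -> ups s2 = downs s2 ->
  s1 ++ false :: x = s2 ++ false :: y -> s1 = s2 /\ x = y.
Proof.
move=> P1 P2 b1 b2 e.
case: (ltngtP (size s1) (size s2)) => h.
- by case: (split_lt P2 b1 e h).
- by case: (split_lt P1 b2 (esym e) h).
- by move/eqP: e; rewrite eqseq_cat // => /andP [/eqP -> /eqP [->]].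
Qed.

Lemma enc_inj t t' : enc t = enc t' -> t = t'.
Proof.
elim: t t' => [|l IHl r IHr] [|l' r'] //= [].
case/split_uniq; rewrite ?enc_ups ?enc_downs //; try exact: enc_PN.
by move=> /IHl -> /IHr ->.
Qed.

Lemma enc_app a b : enc (app a b) = enc a ++ enc b.
Proof. by elim: a => //= l _ r ->; rewrite -catA. Qed.

Fixpoint stk (t0 : tree) (ts : seq tree) : seq bool :=
  match ts with [::] => enc t0 | t :: ts' => stk t0 ts' ++ true :: enc t end.

Lemma stk_ud t0 ts : ups (stk t0 ts) = downs (stk t0 ts) + size ts.
Proof.
elim: ts => /= [|t ts IH]; first by rewrite enc_ups enc_downs addn0.
rewrite ?udE IH enc_ups enc_downs /=; lia.
Qed.

Lemma PN_rcons p b : PN (rcons p b) -> PN p.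
Proof.
move=> H i; case: (leqP i (size p)) => hi.
- by have := H i; rewrite -cats1 takel_cat.
- by have := H (size p); rewrite -cats1 takel_cat // take_size take_oversize // ltnW.
Qed.

Lemma PN_stk p : PN p -> exists t0 ts, p = stk t0 ts.
Proof.
elim/last_ind: p => [|p b IH] H; first by exists Lf, [::].
have [t0 [ts ep]] := IH (PN_rcons H).
case: b H => H.
- by exists t0, (Lf :: ts); rewrite ep /= cats1.
- have := H (size (rcons p false)); rewrite take_size -cats1 ?udE /= ep stk_ud => hlt.
  case: ts {ep} hlt => [|tl [|tm ts2]] /= hlt; first lia.
  + exists (app t0 (Nd tl Lf)), [::].
    by rewrite /= enc_app /= -catA.
  + exists t0, (app tm (Nd tl Lf) :: ts2).
    by rewrite /= enc_app /= -!catA.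
Qed.

Lemma dyck_enc n p : dyck n p -> exists t, p = enc t /\ tsize t = n.
Proof.
case=> hu hd hp.
have [t0 [ts ep]] := PN_stk hp.
have := stk_ud t0 ts; rewrite -ep hu hd.
case: ts ep => [|? ?] ep /=; last lia.
by move=> _; exists t0; split=> //; rewrite -(enc_ups t0) -hu ep.
Qed.

Lemma enc_dyck t : dyck (tsize t) (enc t).
Proof. split; [exact: enc_ups|exact: enc_downs|exact: enc_PN]. Qed.

Lemma count_iota_split (P : pred nat) m n :
  count P (iota 0 (m + n)) = count P (iota 0 m) + count (fun j => P (m + j)) (iota 0 n).
Proof.
rewrite iotaD count_cat add0n.
have -> : iota m n = map (addn m) (iota 0 n) by rewrite -iotaDl addn0.
by rewrite count_map.
Qed.

Lemma nth_shift x (a b : path_t) j : nth x (a ++ b) (size a + j) = nth x b j.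
Proof. by rewrite nth_cat ltnNge leq_addr /= addKn. Qed.
Lemma take_shift (a b : path_t) j : take (size a + j) (a ++ b) = a ++ take j b.
Proof. by rewrite take_cat ltnNge leq_addr /= addKn. Qed.

Lemma ret_shift a b j : ups a = downs a -> is_return (a ++ b) (size a + j) = is_return b j.
Proof.
move=> e; by rewrite /is_return size_cat ltn_add2l nth_shift -addnS take_shift ?udE e eqn_add2l.
Qed.

Lemma hill_shift a b j : ups a = downs a -> is_early_hill (a ++ b) (size a + j) = is_early_hill b j.
Proof.
move=> e; rewrite /is_early_hill size_cat -!addnS leq_add2l !nth_shift.
by rewrite take_shift ?udE e eqn_add2l.
Qed.

Lemma ret_left a b i : i < size a -> is_return (a ++ b) i = is_return a i.
Proof.
move=> hi; rewrite /is_return size_cat nth_cat hi takel_cat //.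
by rewrite (leq_trans hi (leq_addr _ _)).
Qed.

Lemma sizeA l : size (enc (Nd l Lf)) = (size (enc l)).+2.
Proof. by rewrite /= size_cat addn1. Qed.

Lemma strict1 l i : 0 < i < (size (enc l)).+2 ->
  downs (take i (enc (Nd l Lf))) < ups (take i (enc (Nd l Lf))).
Proof.
case: i => // i /andP [_ hi] /=.
rewrite takel_cat; last lia.
have := enc_PN l i; rewrite ?udE /=; lia.
Qed.

Lemma retA l i : is_return (enc (Nd l Lf)) i = (i == (size (enc l)).+1).
Proof.
case: (ltngtP i (size (enc l)).+1) => h.
- have := @strict1 l i.+1 ltac:(lia).
  rewrite /is_return => /gtn_eqF ->; by rewrite !andbF.
- by rewrite /is_return sizeA ltnNge h.
- rewrite /is_return take_oversize; last by rewrite sizeA h.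
  rewrite enc_ups enc_downs eqxx sizeA h ltnSn /= andbT.
  by rewrite nth_cat ltnn subnn.
Qed.

Lemma enc_split l r : enc (Nd l r) = enc (Nd l Lf) ++ enc r.
Proof. by rewrite /= -catA. Qed.

Lemma nreturns_enc t : nreturns (enc t) = nret t.
Proof.
elim: t => // l _ r IH.
rewrite enc_split /nreturns size_cat count_iota_split.
rewrite [X in _ + X](eq_count (a2 := is_return (enc r))); last first.
  by move=> j; rewrite ret_shift // enc_ups enc_downs.
rewrite -/(nreturns (enc r)) IH.
rewrite (eq_in_count (a2 := pred1 (size (enc l)).+1)); last first.
  by move=> i; rewrite mem_iota => /andP [_ hi]; rewrite ret_left // retA.
by rewrite count_uniq_mem ?iota_uniq // mem_iota sizeA add0n leq0n ltnSn.
Qed.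

Lemma hill_left0 l b i : 0 < i < (size (enc l)).+2 ->
  is_early_hill (enc (Nd l Lf) ++ b) i = false.
Proof.
move=> hi; rewrite /is_early_hill takel_cat; last by rewrite sizeA; lia.
by rewrite (gtn_eqF (strict1 hi)) !andbF.
Qed.

Lemma nh_enc t : nearly_hills (enc t) = nh t.
Proof.
elim: t => // l _ r IH.
rewrite enc_split /nearly_hills size_cat count_iota_split.
rewrite [X in _ + X](eq_count (a2 := is_early_hill (enc r))); last first.
  by move=> j; rewrite hill_shift // enc_ups enc_downs.
rewrite -/(nearly_hills (enc r)) IH sizeA.
rewrite [iota 0 _]/= [count _ (_ :: _)]/=.
rewrite (eq_in_count (a2 := pred0)); last first.
  by move=> i; rewrite mem_iota => hi; rewrite hill_left0 //; lia.
rewrite count_pred0 addn0 /=; congr (_ + _).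
have := @hill_left0 l (enc r) 1 isT; rewrite /= => ->; rewrite addn0.
by case: l => [|? ?]; case: r {IH} => [|? ?]; rewrite /is_early_hill /= ?andbF.
Qed.

Lemma trailing_downs_cat s1 s2 : trailing_downs (s1 ++ s2) =
  if has id s2 then trailing_downs s2 else size s2 + trailing_downs s1.
Proof. by rewrite /trailing_downs rev_cat find_cat has_rev size_rev. Qed.

Lemma has_enc t : has id (enc t) = ~~ isLf t.
Proof. by case: t. Qed.

Lemma td_enc t : trailing_downs (enc t) = td t.
Proof.
elim: t => // l IHl r IHr.
rewrite enc_split trailing_downs_cat has_enc /=.
case: r IHr => [|? ?] IHr //=.
change (trailing_downs (([:: true] ++ enc l) ++ [:: false]) = (td l).+1).
rewrite (trailing_downs_cat _ [:: false]) (trailing_downs_cat [:: true]) has_enc /=.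
by case: l IHl => [|? ?] //= ->.
Qed.

Definition Cs (p : path_t) := forall i, is_return p i -> i.+1 < size p ->
  odd (trailing_downs (take i.+1 p)).

Lemma ret_has b j : is_return b j -> has id (take j.+1 b).
Proof.
case/and3P => hj hn /eqP he.
rewrite has_count -[count id _]/(ups _); move: he; rewrite (take_nth true hj) -cats1 ?udE.
case: (nth true b j) hn => //= _; lia.
Qed.

Lemma Cs_cat l b : Cs (enc (Nd l Lf) ++ b) <->
  ((b != [::]) -> odd (trailing_downs (enc (Nd l Lf)))) /\ Cs b.
Proof.
have bal : ups (enc (Nd l Lf)) = downs (enc (Nd l Lf)) by rewrite enc_ups enc_downs.
split.
- move=> H; split.
  + move=> hb; have := H (size (enc l)).+1.
    rewrite ret_left ?sizeA // retA eqxx size_cat sizeA take_size_cat ?sizeA //.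
    apply=> //; move: hb; rewrite -size_eq0 => hb.
    by rewrite -[X in X < _]addn0 ltn_add2l lt0n.
  + move=> j hj hs.
    have := H (size (enc (Nd l Lf)) + j).
    rewrite ret_shift // size_cat -addnS ltn_add2l take_shift trailing_downs_cat ret_has //.
    by apply.
- case=> h1 h2 i hi hs.
  case: (ltnP i (size (enc (Nd l Lf)))) => hlt.
  + move: hi; rewrite ret_left // retA => /eqP ei; subst i.
    rewrite take_size_cat ?sizeA //; apply: h1.
    by move: hs; rewrite size_cat sizeA; case: b {h2} => //=; rewrite addn0 ltnn.
  + move: hi hs; rewrite -(subnKC hlt) ret_shift // size_cat -addnS ltn_add2l.
    move=> hi hs; rewrite take_shift trailing_downs_cat ret_has //.
    exact: h2.
Qed.

Lemma C_enc t : Cs (enc t) <-> Cp t.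
Proof.
elim: t => [|l _ r IH]; first by split=> // _ i; case/and3P.
rewrite enc_split Cs_cat td_enc /=.
have -> : (enc r != [::]) = ~~ isLf r by case: (r).
split; case=> h1 /IH h2; split=> //.
Qed.

Lemma sig_eq (P : path_t -> Prop) (x y : {p : path_t | P p}) :
  proj1_sig x = proj1_sig y -> x = y.
Proof.
case: x => x px; case: y => y py /= e; subst y.
by rewrite (proof_irrelevance _ px py).
Qed.

Theorem theorem2 (n k : nat) (hn : 2 <= n) (hk : 1 <= k) :
  exists f : {p : path_t | in_A n p /\ nreturns p = k} ->
             {q : path_t | dyck n.-1 q /\ nearly_hills q = k.-1},
    bijective f.
Proof.
pose RR (p q : path_t) := exists t u, [/\ p = enc t, q = enc u & Big k t u].
have exA : forall a : {p : path_t | in_A n p /\ nreturns p = k},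
    exists b : {q : path_t | dyck n.-1 q /\ nearly_hills q = k.-1},
    RR (proj1_sig a) (proj1_sig b).
  case=> p [[hd ho hc] hr] /=.
  have [t [ep hs]] := dyck_enc hd; subst p.
  rewrite /terminal_descent_length td_enc in ho.
  have hC : Cp t by exact: (proj1 (C_enc t) hc).
  rewrite nreturns_enc in hr.
  have [u hu] := Big_exA hr ho hC hk.
  have [e1 _ _ _ [e5 _ _ _]] := Big_prop hu.
  have hdu : dyck n.-1 (enc u) by have := enc_dyck u; rewrite -hs -e1.
  exists (exist _ (enc u) (conj hdu (etrans (nh_enc u) e5))).
  by exists t, u.
have exB : forall b : {q : path_t | dyck n.-1 q /\ nearly_hills q = k.-1},
    exists a : {p : path_t | in_A n p /\ nreturns p = k},
    RR (proj1_sig a) (proj1_sig b).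
  case=> q [hd hh] /=.
  have [u [eq hs]] := dyck_enc hd; subst q.
  rewrite nh_enc in hh.
  have hu : u <> Lf by move=> e; subst u; move: hs => /= hs; lia.
  have [t ht] := Big_exB hu hh hk.
  have [e1 e2 e3 e4 _] := Big_prop ht.
  have hA : in_A n (enc t).
    split.
    - have := enc_dyck t; rewrite -e1 hs; by have -> : (n.-1).+1 = n by lia.
    - by rewrite /terminal_descent_length td_enc.
    - exact: (proj2 (C_enc t) e4).
  exists (exist _ (enc t) (conj hA (etrans (nreturns_enc t) e2))).
  by exists t, u.
have uniqB : forall a b b', RR a b -> RR a b' -> b = b'.
  move=> a b b' [t [u [-> -> H]]] [t' [u' [/enc_inj e -> H']]]; subst t'.
  by rewrite (Big_fun H H').
have uniqA : forall a a' b, RR a b -> RR a' b -> a = a'.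
  move=> a a' b [t [u [-> -> H]]] [t' [u' [-> /enc_inj e H']]]; subst u'.
  by rewrite (Big_inj H H').
pose f a := proj1_sig (constructive_indefinite_description _ (exA a)).
pose g b := proj1_sig (constructive_indefinite_description _ (exB b)).
exists f, g.
- move=> a; apply: sig_eq.
  have h1 := proj2_sig (constructive_indefinite_description _ (exA a)).
  have h2 := proj2_sig (constructive_indefinite_description _ (exB (f a))).
  exact: (uniqA _ _ _ h2 h1).
- move=> b; apply: sig_eq.
  have h1 := proj2_sig (constructive_indefinite_description _ (exB b)).
  have h2 := proj2_sig (constructive_indefinite_description _ (exA (g b))).
  exact: (uniqB _ _ _ h2 h1).
Qed.
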